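(* Define $g:\{0,1\}^*\to\mathbb{T}$ by $g(\epsilon)=\bullet$, $g(0)=\mathcal{L}$, $g(1)=\mathcal{R}$ and $g(b_1\cdots b_n)=g(b_1)\bowtie\cdots\bowtie g(b_n)$ for $b_i\in\{0,1\}$ (so that $g(s\cdot 0)=g(s)\bowtie\mathcal{L}$ and $g(s\cdot 1)=g(s)\bowtie\mathcal{R}$). Then $g$ is a bijection from $\{0,1\}^*$ onto the set $\mathbb{U}$ of unary trees, and for all $x,y\in\{0,1\}^*$: $x\preceq y$ (i.e. there is $z$ with $x\cdot z=y$) iff $g(y)\sqsubseteq g(x)$.
   Context: A tree share is a finite binary tree whose leaves are labelled $\bullet$ (black) or $\circ$ (white), in canonical form: no subtree has the form $\mathrm{Node}(\bullet,\bullet)$ or $\mathrm{Node}(\circ,\circ)$ (such subtrees are identified with the leaf $\bullet$, resp. $\circ$). $\mathbb{T}$ denotes the set of tree shares. $\tau_1\sqcup\tau_2$ is computed by unfolding both trees (replacing a leaf $\ell$ by $\mathrm{Node}(\ell,\ell)$ as needed) to a common shape, taking Boolean join leafwise ($\bullet$ = true, $\circ$ = false), and refolding to canonical form. $\tau_1\sqsubseteq\tau_2$ means $\tau_1\sqcup\tau_2=\tau_2$. The product $\tau_1\bowtie\tau_2$ is obtained by replacing every $\bullet$ leaf of $\tau_1$ by a copy of $\tau_2$ and refolding to canonical form. $\mathcal{L}=\mathrm{Node}(\bullet,\circ)$ and $\mathcal{R}=\mathrm{Node}(\circ,\bullet)$. A unary tree is a tree share with exactly one black leaf; $\mathbb{U}$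 is the set of unary trees. *)

(* Defs.v *)
From Stdlib Require Import List Bool.
Import ListNotations.

(* Raw binary trees with leaves coloured: true = black (•), false = white (∘). *)
Inductive tree : Type :=
| Leaf : bool -> tree
| Node : tree -> tree -> tree.

Fixpoint canonical (t : tree) : bool :=
  match t with
  | Leaf _ => true
  | Node (Leaf b1) (Leaf b2) => negb (Bool.eqb b1 b2)
  | Node l r => canonical l && canonical r
  end.

Definition mkNode (l r : tree) : tree :=
  match l, r with
  | Leaf b1, Leaf b2 => if Bool.eqb b1 b2 then Leaf b1 else Node l r
  | _, _ => Node l r
  end.

(* Join ⊔: unfold to a common shape, leafwise boolean "or", refold. *)
Fixpoint tjoin (t1 t2 : tree) : tree :=
  match t1, t2 with
  | Leaf true, _ => Leaf true
  | Leaf false, _ => t2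
  | _, Leaf true => Leaf true
  | _, Leaf false => t1
  | Node a b, Node c d => mkNode (tjoin a c) (tjoin b d)
  end.

Definition tle (t1 t2 : tree) : Prop := tjoin t1 t2 = t2.

Fixpoint tbowtie (t1 t2 : tree) : tree :=
  match t1 with
  | Leaf true => t2
  | Leaf false => Leaf false
  | Node l r => mkNode (tbowtie l t2) (tbowtie r t2)
  end.

Definition tL : tree := Node (Leaf true) (Leaf false).
Definition tR : tree := Node (Leaf false) (Leaf true).

Fixpoint nblack (t : tree) : nat :=
  match t with
  | Leaf b => if b then 1 else 0
  | Node l r => nblack l + nblack r
  end.

Definition unary (t : tree) : Prop := canonical t = true /\ nblack t = 1.

(* g : {0,1}^* -> T ; bit false = 0 ↦ L, bit true = 1 ↦ R,
   g(b1...bn) = g(b1) ⋈ (... ⋈ (g(bn) ⋈ •)). *)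
Definition gbit (b : bool) : tree := if b then tR else tL.

Fixpoint g (s : list bool) : tree :=
  match s with
  | [] => Leaf true
  | b :: s' => tbowtie (gbit b) (g s')
  end.

(* Main.v *)
Require Import Defs.
From Stdlib Require Import List Bool Lia.
Import ListNotations.

Lemma g_nLF : forall s, g s <> Leaf false.
Proof. induction s as [|[|] s IH]; simpl; [congruence| |];
  destruct (g s) as [[|]|]; simpl; congruence. Qed.

Lemma g_cons : forall b s, g (b :: s) =
  if b then Node (Leaf false) (g s) else Node (g s) (Leaf false).
Proof. intros b s; pose proof (g_nLF s); destruct b; simpl;
  destruct (g s) as [[|]|]; simpl; congruence. Qed.

Lemma mkNode_Node : forall a b c d, mkNode a b = Node c d -> a = c /\ b = d.
Proof. intros [x|] [y|] c d H; simpl in H; try (injection H; auto).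
  destruct (Bool.eqb x y); [discriminate|injection H; auto]. Qed.

Lemma tjoin_LF : forall t, tjoin t (Leaf false) = t.
Proof. destruct t as [[|]|]; reflexivity. Qed.

Lemma can_split : forall l r, canonical (Node l r) = true -> canonical l = true /\ canonical r = true.
Proof. intros [x|] [y|] H; simpl in *; auto; apply andb_prop in H; tauto. Qed.

Lemma zero_black : forall t, canonical t = true -> nblack t = 0 -> t = Leaf false.
Proof. induction t as [[|]|l IHl r IHr]; simpl; intros Hc Hn; try lia; auto.
  destruct (can_split _ _ Hc) as [Hl Hr].
  rewrite IHl in Hc by (auto; lia). rewrite IHr in Hc by (auto; lia).
  simpl in Hc; discriminate. Qed.

Theorem lemma3 :
  (forall s : list bool, unary (g s)) /\
  (forall s1 s2 : list bool, g s1 = g s2 -> s1 = s2) /\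
  (forall t : tree, unary t -> exists s : list bool, g s = t) /\
  (forall x y : list bool, (exists z : list bool, x ++ z = y) <-> tle (g y) (g x)).
Proof.
  split; [|split; [|split]].
  - induction s as [|b s [Hc Hn]]; [split; reflexivity|].
    rewrite g_cons; destruct b; split; try (simpl; lia);
    (destruct s as [|b' s']; [reflexivity|]);
    rewrite (g_cons b' s') in *; destruct b'; simpl in *; rewrite Hc; auto.
  - induction s1 as [|b s1 IH]; destruct s2 as [|b' s2]; intros H;
      try rewrite !g_cons in H; try rewrite g_cons in H; simpl in H; auto;
      try (destruct b; discriminate); try (destruct b'; discriminate).
    destruct b, b'; injection H; intros; subst;
      try (f_equal; apply IH; congruence);
      exfalso; eapply g_nLF; eauto.
  - induction t as [b|l IHl r IHr]; intros [Hc Hn].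
    + exists []. destruct b; simpl in *; [reflexivity|discriminate].
    + simpl in Hn. destruct (can_split _ _ Hc) as [Hl Hr].
      destruct (nblack l) eqn:El.
      * assert (l = Leaf false) by (apply zero_black; auto). subst.
        destruct (IHr (conj Hr Hn)) as [s Hs]. exists (true :: s). rewrite g_cons, Hs; auto.
      * assert (r = Leaf false) by (apply zero_black; auto; lia). subst.
        simpl in Hn; assert (Hl1 : nblack l = 1) by lia; destruct (IHl (conj Hl Hl1)) as [s Hs]. exists (false :: s). rewrite g_cons, Hs; auto.
  - unfold tle. induction x as [|b x IH]; intros y; split.
    + intros _. simpl. destruct (g y) as [[|]|]; reflexivity.
    + intros _. exists y; reflexivity.
    + intros [z <-]. simpl app. rewrite !g_cons.
      assert (E : tjoin (g (x ++ z)) (g x) = g x) by (apply IH; eauto).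
      pose proof (g_nLF x).
      destruct b; simpl; rewrite E; destruct (g x) as [[|]|]; simpl; congruence.
    + intros H. destruct y as [|b' y].
      * rewrite g_cons in H; destruct b; simpl in H; discriminate.
      * rewrite !g_cons in H. destruct b, b'; cbn [tjoin] in H;
          destruct (mkNode_Node _ _ _ _ H) as [H1 H2];
          try rewrite tjoin_LF in *.
        -- destruct (proj2 (IH y) H2) as [z Hz]. exists z; simpl; congruence.
        -- exfalso; eapply g_nLF; eauto.
        -- exfalso; eapply g_nLF; eauto.
        -- destruct (proj2 (IH y) H1) as [z Hz]. exists z; simpl; congruence.
Qed.
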